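(* Let $(X,d,\mu)$ be a space of homogeneous type, let $p(\cdot)$ be an exponent, and let $w\in A_{p(\cdot)}$. Then there exists a constant $C$ depending on $p(\cdot)$ and $w$ such that for every ball $B$ and every measurable set $E\subset B$, \[ \frac{\mu(E)}{\mu(B)}\le C\,\frac{\|w\chi_E\|_{p(\cdot)}}{\|w\chi_B\|_{p(\cdot)}}. \]
   Context: A space of homogeneous type $(X,d,\mu)$: $X$ nonempty, $d$ a quasi-metric ($d(x,y)=0$ iff $x=y$, symmetric, $d(x,y)\le A_0(d(x,z)+d(z,y))$ for some $A_0\ge1$), $\mu$ a regular measure on the $\sigma$-algebra generated by balls $B(x,r)=\{y:d(x,y)<r\}$ and open sets, with $0<\mu(B(x,2r))\le C_\mu\mu(B(x,r))<\infty$. An exponent is a measurable $p:X\to[1,\infty]$. With $X_\infty=\{p=\infty\}$, $\rho_{p(\cdot)}(f)=\int_{X\setminus X_\infty}|f(x)|^{p(x)}d\mu+\|f\|_{L^\infty(X_\infty)}$ and $\|f\|_{p(\cdot)}=\inf\{\lambda>0:\rho_{p(\cdot)}(f/\lambda)\le1\}$; $p'(x)=p(x)/(p(x)-1)$ (with $1/0=\infty$, $1/\infty=0$). A weight is a locally integrable $w:X\to[0,\infty]$ with $0<w<\infty$ a.e.; $w\in A_{p(\cdot)}$ means there is $K$ with $\|w\chi_B\|_{p(\cdot)}\|w^{-1}\chi_B\|_{p'(\cdot)}\le K\mu(B)$ for every ball $B$. *)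

(* Defs.v *)
From HB Require Import structures.
From mathcomp Require Import all_boot all_order all_algebra.
From mathcomp Require Import all_classical all_reals all_analysis.
From mathcomp Require Import measurable_realfun.
Set Implicit Arguments. Unset Strict Implicit. Unset Printing Implicit Defensive.
Import Order.TTheory GRing.Theory Num.Theory.
Local Open Scope classical_set_scope.
Local Open Scope ring_scope.

Section Defs.
Context {d : measure_display} {T : measurableType d} {R : realType}.

Definition qball (dist : T -> T -> R) (x : T) (r : R) : set T :=
  [set y | dist x y < r].

Definition qopen (dist : T -> T -> R) (U : set T) : Prop :=
  forall x, U x -> exists2 r : R, 0 < r & qball dist x r `<=` U.

Definition quasi_metric (dist : T -> T -> R) : Prop :=
  (forall x y, 0 <= dist x y) /\
  (forall x y, dist x y = 0 <-> x = y) /\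
  (forall x y, dist x y = dist y x) /\
  (exists2 A0 : R, 1 <= A0 &
     forall x y z, dist x y <= A0 * (dist x z + dist z y)).

Definition qregular (dist : T -> T -> R) (mu : {measure set T -> \bar R}) : Prop :=
  forall A, measurable A ->
    mu A = ereal_inf [set mu U | U in [set U | qopen dist U /\ A `<=` U]].

Definition homogeneous_type (dist : T -> T -> R) (mu : {measure set T -> \bar R}) : Prop :=
  (exists x : T, True) /\
  quasi_metric dist /\
  (forall x r, measurable (qball dist x r)) /\
  (forall U, qopen dist U -> measurable U) /\
  qregular dist mu /\
  (exists Cmu : R, forall x (r : R), 0 < r ->
        [/\ (0 < mu (qball dist x r))%E,
            (mu (qball dist x r) < +oo)%E &
            (mu (qball dist x (2 * r)) <= Cmu%:E * mu (qball dist x r))%E]).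

Definition exponent (p : T -> \bar R) : Prop :=
  measurable_fun setT p /\ (forall x, 1%E <= p x)%E.

(* conjugate exponent p' = p/(p-1), with 1/0 = +oo and 1/+oo = 0 *)
Definition conj_exp (p : T -> \bar R) : T -> \bar R := fun x =>
  match p x with
  | r%:E => if r == 1 then +oo%E else (r / (r - 1))%:E
  | +oo%E => 1%E
  | -oo%E => 1%E
  end.

Definition Linf_on (mu : {measure set T -> \bar R}) (A : set T) (f : T -> R) : \bar R :=
  ereal_inf [set M : \bar R | (0 <= M)%E /\
    {ae mu, forall x, A x -> (`|f x|%:E <= M)%E}].

Definition modular (mu : {measure set T -> \bar R}) (p : T -> \bar R) (f : T -> R) : \bar R :=
  (\int[mu]_(x in [set x | p x != +oo%E]) (`|f x| `^ fine (p x))%:E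
   + Linf_on mu [set x | p x = +oo%E] f)%E.

Definition vnorm (mu : {measure set T -> \bar R}) (p : T -> \bar R) (f : T -> R) : \bar R :=
  ereal_inf [set l%:E | l in [set l : R | 0 < l /\ (modular mu p (fun x => (f x / l)%R) <= 1)%E]].

Definition weight (dist : T -> T -> R) (mu : {measure set T -> \bar R}) (w : T -> R) : Prop :=
  [/\ measurable_fun setT w,
      (forall x (r : R), 0 < r -> mu.-integrable (qball dist x r) (fun y => (w y)%:E)),
      (forall x, 0 <= w x) &
      {ae mu, forall x, 0 < w x}].

Definition A_p (dist : T -> T -> R) (mu : {measure set T -> \bar R}) (p : T -> \bar R)
    (w : T -> R) : Prop :=
  weight dist mu w /\
  exists K : R, forall x (r : R), 0 < r ->
    (vnorm mu p (fun y => (w y * \1_(qball dist x r) y)%R)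
     * vnorm mu (conj_exp p) (fun y => ((w y)^-1 * \1_(qball dist x r) y)%R)
     <= K%:E * mu (qball dist x r))%E.

End Defs.

(* Main.v *)
Require Import Defs.
From HB Require Import structures.
From mathcomp Require Import all_boot all_order all_algebra.
From mathcomp Require Import all_classical all_reals all_analysis.
From mathcomp Require Import measurable_realfun.
From mathcomp Require Import ring lra.
Import Order.TTheory GRing.Theory Num.Theory.
Local Open Scope classical_set_scope.
Local Open Scope ring_scope.

Set Implicit Arguments. Unset Strict Implicit.

Section Helpers.
Context {d : measure_display} {T : measurableType d} {R : realType}.
Variable mu : {measure set T -> \bar R}.

Lemma le_integral_nm (D : set T) (f1 f2 : T -> \bar R) :
  (forall x, D x -> (0 <= f1 x)%E) -> (forall x, D x -> (f1 x <= f2 x)%E) ->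
  (\int[mu]_(x in D) f1 x <= \int[mu]_(x in D) f2 x)%E.
Proof.
move=> f10 f12.
have f20 x : D x -> (0 <= f2 x)%E by move=> Dx; exact: le_trans (f10 _ Dx) (f12 _ Dx).
rewrite !ge0_integralE//.
apply: le_ereal_sup => _ [h hf <-]; exists h => // x.
apply: le_trans (hf x) _.
rewrite /patch; case: ifPn => // /[1!inE] Dx; exact: f12.
Qed.

Lemma measurable_powR2 (a b : T -> R) : measurable_fun setT a ->
  measurable_fun setT b -> measurable_fun setT (fun x => a x `^ b x).
Proof.
move=> ma mb.
rewrite (_ : (fun x => _) = fun x => if a x == 0 then (if b x == 0 then 1 else 0)
   else expR (b x * ln (a x))); last first.
  by apply/funext => x; rewrite /powR; case: (b x == 0).
apply: measurable_fun_ifT.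
- exact: measurable_fun_eqr ma (measurable_cst _).
- apply: measurable_fun_ifT => //; exact: measurable_fun_eqr mb (measurable_cst _).
- apply: measurableT_comp; first exact: measurable_expR.
  apply: measurable_funM => //; apply: measurableT_comp => //; exact: measurable_ln.
Qed.

Lemma measurable_conj (p : T -> \bar R) : exponent p -> measurable_fun setT (conj_exp p).
Proof.
move=> [mp p1].
rewrite (_ : conj_exp p = fun x => if p x == 1%E then +oo%E else
   if p x == +oo%E then 1%E else if p x == -oo%E then 1%E else
   (fine (p x) * (fine (p x) - 1) `^ (-1))%:E); last first.
  apply/funext => x; rewrite /conj_exp; move: (p1 x); case: (p x) => [r| |] //=.
  rewrite lee_fin => r1; rewrite eqe; case: ifPn => // /eqP rn1.
  by rewrite powR_inv1// subr_ge0.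
apply: measurable_fun_ifT => //; first exact: measurable_fun_eqe.
apply: measurable_fun_ifT => //; first exact: measurable_fun_eqe.
apply: measurable_fun_ifT => //; first exact: measurable_fun_eqe.
have : measurable_fun setT (fun x => fine (p x) * (fine (p x) - 1) `^ (-1)).
  have mfp : measurable_fun setT (fun x => fine (p x)) by exact: measurableT_comp.
  have mfp1 : measurable_fun setT (fun x => fine (p x) - 1).
    exact: (measurable_funB mfp (measurable_cst (1:R))).
  have mpw : measurable_fun setT (fun x => (fine (p x) - 1) `^ (-1)).
    exact: (measurableT_comp (measurable_powR _) mfp1).
  exact: (measurable_funM mfp mpw).
by move/measurable_EFinP.
Qed.

End Helpers.

Section Helpers2.
Context {d : measure_display} {T : measurableType d} {R : realType}.
Variable mu : {measure set T -> \bar R}.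

Lemma mod_split (s : T -> \bar R) (f : T -> R) : (modular mu s f <= 1)%E ->
 (\int[mu]_(x in [set x | s x != +oo%E]) (`|f x| `^ fine (s x))%:E <= 1)%E /\
 {ae mu, forall x, s x = +oo%E -> `|f x| <= 2}.
Proof.
rewrite /modular => H.
have I0 : (0 <= \int[mu]_(x in [set x | s x != +oo%E]) (`|f x| `^ fine (s x))%:E)%E.
  by apply: integral_ge0 => x _; rewrite lee_fin powR_ge0.
have L0 : (0 <= Linf_on mu [set x | s x = +oo%E] f)%E.
  by apply/ereal_infP => y [].
split; first exact: le_trans (leeDl _ L0) H.
have : (Linf_on mu [set x | s x = +oo%E] f < 2%:E)%E.
  apply: (@le_lt_trans _ _ 1%E); last by rewrite lte_fin; lra.
  apply: le_trans H; exact: leeDr.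
move=> /ereal_inf_lt [M [M0 HM] M2].
apply: filterS HM => x Hx sx; have := Hx sx => h.
by rewrite -lee_fin; exact: le_trans h (ltW M2).
Qed.

Lemma pw (p : T -> \bar R) (u v : T -> R) x : (1 <= p x)%E ->
  (p x = +oo%E -> `|u x| <= 2) -> (conj_exp p x = +oo%E -> `|v x| <= 2) ->
  ((`|u x * v x|)%:E <= 2%:E * ((if p x == +oo%E then 0 else (`|u x| `^ fine (p x))%:E)
     + (if conj_exp p x == +oo%E then 0 else (`|v x| `^ fine (conj_exp p x))%:E)))%E.
Proof.
rewrite /conj_exp; case: (p x) => [r| |] /=.
- rewrite lee_fin => r1 _; case: ifPn => [/eqP -> Hv|rn1 _].
  + have := Hv erefl; rewrite eqxx powRr1 // adde0 -EFinM lee_fin normrM => hv.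
    have := normr_ge0 (u x); nra.
  + have r1' : 1 < r by rewrite lt_neqAle eq_sym rn1.
    have r0 : 0 < r by lra.
    have s0 : 0 < r / (r - 1) by apply: divr_gt0; lra.
    have rs : r^-1 + (r / (r - 1))^-1 = 1.
      rewrite invf_div; field; lra.
    have := conjugate_powR (normr_ge0 (u x)) (normr_ge0 (v x)) r0 s0 rs.
    set A := `|u x| `^ r; set B := `|v x| `^ (r / (r - 1)) => H.
    have A0 : 0 <= A by exact: powR_ge0.
    have B0 : 0 <= B by exact: powR_ge0.
    have hA : A / r <= A by rewrite ler_pdivrMr //; nra.
    have s1 : 1 <= r / (r - 1) by rewrite ler_pdivlMr; lra.
    have hB : B / (r / (r - 1)) <= B by rewrite ler_pdivrMr //; nra.
    rewrite -EFinD -EFinM lee_fin normrM; lra.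
- move=> _ Hu _; have := Hu erefl; rewrite ?eqxx /= powRr1 // add0e -EFinM lee_fin normrM => hu.
  have := normr_ge0 (v x); nra.
- by rewrite leeNy_eq.
Qed.

End Helpers2.

Section Helpers3.
Context {d : measure_display} {T : measurableType d} {R : realType}.
Variable mu : {measure set T -> \bar R}.

Lemma int_if (s : T -> \bar R) (f : T -> R) :
  (\int[mu]_x (if s x == +oo%E then 0%E else (f x)%:E) =
   \int[mu]_(x in [set x | s x != +oo%E]) (f x)%:E)%E.
Proof.
rewrite [RHS]integral_mkcond; apply: eq_integral => x _; rewrite /patch.
have [H|H] := eqVneq (s x) +oo%E.
  by rewrite memNset // /= H.
by rewrite mem_set.
Qed.

Lemma holder_var (p : T -> \bar R) (u v : T -> R) : exponent p ->
  measurable_fun setT u -> measurable_fun setT v ->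
  (modular mu p u <= 1)%E -> (modular mu (conj_exp p) v <= 1)%E ->
  (\int[mu]_x (`|u x * v x|)%:E <= 4%:E)%E.
Proof.
move=> hp mu_ mv Hu Hv; have [mp p1] := hp; have mq := measurable_conj hp.
have [Iu aeu] := mod_split Hu; have [Iv aev] := mod_split Hv.
set h1 := fun x => if p x == +oo%E then 0%E else (`|u x| `^ fine (p x))%:E.
set h2 := fun x => if conj_exp p x == +oo%E then 0%E
                   else (`|v x| `^ fine (conj_exp p x))%:E.
have h10 x : (0 <= h1 x)%E by rewrite /h1; case: ifPn => // _; rewrite lee_fin powR_ge0.
have h20 x : (0 <= h2 x)%E by rewrite /h2; case: ifPn => // _; rewrite lee_fin powR_ge0.
have mh1 : measurable_fun setT h1.
  apply: measurable_fun_ifT => //; first exact: measurable_fun_eqe.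
  have : measurable_fun setT (fun x => `|u x| `^ fine (p x)).
    apply: measurable_powR2; [exact: measurableT_comp | exact: measurableT_comp].
  by move/measurable_EFinP.
have mh2 : measurable_fun setT h2.
  apply: measurable_fun_ifT => //; first exact: measurable_fun_eqe.
  have : measurable_fun setT (fun x => `|v x| `^ fine (conj_exp p x)).
    apply: measurable_powR2; [exact: measurableT_comp | exact: measurableT_comp].
  by move/measurable_EFinP.
apply: (@le_trans _ _ (\int[mu]_x (2%:E * (h1 x + h2 x)))%E).
  have M1 : measurable_fun setT (fun x => (`|u x * v x|)%:E).
    have : measurable_fun setT (fun x => `|u x * v x|).
      exact: measurableT_comp (measurable_funM mu_ mv).
    by move/measurable_EFinP.
  have M2 : measurable_fun setT (fun x => (2%:E * (h1 x + h2 x))%E).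
    exact: measurable_funeM (emeasurable_funD mh1 mh2).
  have AE : {ae mu, forall x, setT x -> ((`|u x * v x|)%:E <= 2%:E * (h1 x + h2 x))%E}.
    apply: filterS2 aeu aev => x Hux Hvx _; exact: pw.
  apply: (@ae_ge0_le_integral _ _ _ mu setT measurableT _ _ _ M1 _ M2 AE).
    by move=> x _; rewrite lee_fin.
  by move=> x _; rewrite mule_ge0 // adde_ge0.
rewrite ge0_integralZl_EFin //; last 2 first.
  - by move=> x _; rewrite adde_ge0.
  - exact: emeasurable_funD mh1 mh2.
rewrite ge0_integralD // /h1 /h2 !int_if.
apply: (@le_trans _ _ (2%:E * 2%:E)%E); last by rewrite -EFinM lee_fin; lra.
apply: lee_wpmul2l => //.
rewrite (_ : 2%:E = 1 + 1)%E; last by rewrite -EFinD; congr EFin; lra.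
exact: leeD.
Qed.

Lemma HC (p : T -> \bar R) (w : T -> R) (F1 F2 : set T) (l m : R) :
  exponent p -> measurable_fun setT w -> (forall x, 0 <= w x) ->
  {ae mu, forall x, 0 < w x} ->
  measurable F1 -> measurable F2 -> 0 < l -> 0 < m ->
  (modular mu p (fun y => (w y * \1_F1 y / l)%R) <= 1)%E ->
  (modular mu (conj_exp p) (fun y => ((w y)^-1 * \1_F2 y / m)%R) <= 1)%E ->
  (mu (F1 `&` F2) <= (4 * l * m)%:E)%E.
Proof.
move=> hp mw w0 aew mF1 mF2 l0 m0 H1 H2.
have mwi : measurable_fun setT (fun y => (w y)^-1).
  rewrite (_ : (fun y => _) = fun y => w y `^ (-1)); last first.
    by apply/funext => y; rewrite powR_inv1.
  exact: measurableT_comp (measurable_powR _) mw.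
have mu_ : measurable_fun setT (fun y => w y * \1_F1 y / l).
  have m1 : measurable_fun setT (fun y => w y * \1_F1 y).
    exact (measurable_funM mw (@measurable_indic _ _ R setT F1 mF1)).
  exact (measurable_funM m1 (measurable_cst l^-1)).
have mv : measurable_fun setT (fun y => (w y)^-1 * \1_F2 y / m).
  have m1 : measurable_fun setT (fun y => (w y)^-1 * \1_F2 y).
    exact (measurable_funM mwi (@measurable_indic _ _ R setT F2 mF2)).
  exact (measurable_funM m1 (measurable_cst m^-1)).
have H := holder_var hp mu_ mv H1 H2.
set u := (fun y => w y * \1_F1 y / l) in H mu_.
set v := (fun y => (w y)^-1 * \1_F2 y / m) in H mv.
have M1 : measurable_fun setT (fun x => (`|u x * v x|)%:E).
  have : measurable_fun setT (fun x => `|u x * v x|).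
    exact: measurableT_comp (measurable_funM mu_ mv).
  by move/measurable_EFinP.
rewrite -(setIT (F1 `&` F2)) -integral_indic //; last exact: measurableI.
apply: (@le_trans _ _ (\int[mu]_x ((l * m)%:E * (`|u x * v x|)%:E))%E).
  have M2 : measurable_fun setT (fun x => ((l * m)%:E * (`|u x * v x|)%:E)%E).
    exact: measurable_funeM M1.
  have Mi : measurable_fun setT (fun x => (\1_(F1 `&` F2) x : R)%:E).
    have mi : measurable_fun setT (\1_(F1 `&` F2) : T -> R).
      exact: measurable_indic (measurableI _ _ mF1 mF2).
    exact: (proj2 (@measurable_EFinP _ _ R setT (\1_(F1 `&` F2))) mi).
  have AE : {ae mu, forall x, setT x -> ((\1_(F1 `&` F2) x)%:E <= (l * m)%:E * (`|u x * v x|)%:E)%E}.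
    apply: filterS aew => x wx _.
    rewrite -EFinM lee_fin /u /v !indicE in_setI.
    have lm0 : 0 < l * m by apply: mulr_gt0.
    case: (boolP (x \in F1)) => h1; case: (boolP (x \in F2)) => h2 /=;
      try by rewrite mulr_ge0 // ?normr_ge0 // ltW.
    have wn0 : w x != 0 by rewrite gt_eqF.
    have -> : w x * 1%:R / l * ((w x)^-1 * 1%:R / m) = (l * m)^-1.
      by field; rewrite (gt_eqF m0) (gt_eqF l0) wn0.
    rewrite ger0_norm; last by rewrite invr_ge0 ltW.
    by rewrite mulfV //; exact: (negbT (gt_eqF lm0)).
  apply: (@ae_ge0_le_integral _ _ _ mu setT measurableT _ _ _ Mi _ M2 AE).
    by move=> x _; rewrite lee_fin.
  by move=> x _; rewrite -EFinM lee_fin mulr_ge0 // mulr_ge0 // ltW.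
rewrite ge0_integralZl_EFin //; last by rewrite mulr_ge0 // ltW.
apply: (@le_trans _ _ ((l * m)%:E * 4%:E)%E).
  by apply: lee_wpmul2l => //; rewrite lee_fin mulr_ge0 // ltW.
by rewrite -EFinM lee_fin; lra.
Qed.

End Helpers3.

Section Helpers4.
Context {d : measure_display} {T : measurableType d} {R : realType}.
Variable mu : {measure set T -> \bar R}.

Lemma pow_le_self (a e : R) : 0 <= a -> a <= 1 -> 1 <= e -> a `^ e <= a.
Proof.
move=> a0 a1 e1; have [->|an0] := eqVneq a 0.
  by rewrite powR0 //; apply/eqP; lra.
by apply: ge1r_powR => //; rewrite a1 andbT lt_neqAle eq_sym an0.
Qed.

Lemma measurable_winv (w : T -> R) : (forall x, 0 <= w x) ->
  measurable_fun setT w -> measurable_fun setT (fun y => (w y)^-1).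
Proof.
move=> w0 mw.
rewrite (_ : (fun y => _) = fun y => w y `^ (-1)); last first.
  by apply/funext => y; rewrite powR_inv1.
exact: measurableT_comp (measurable_powR _) mw.
Qed.

Lemma mset_le (g : T -> R) (B : set T) (n : R) : measurable B ->
  measurable_fun setT g -> measurable (B `&` [set y | g y <= n]).
Proof.
move=> mB mg.
rewrite (_ : [set y | g y <= n] = setT `&` g @^-1` `]-oo, n]); last first.
  by rewrite setTI; apply/seteqP; split => y; rewrite /= in_itv.
by apply: measurableI => //; apply: mg => //; exact: measurable_itv.
Qed.

Lemma EXN (g : T -> R) (B : set T) : measurable B -> (0 < mu B)%E ->
  measurable_fun setT g ->
  exists n : nat, (0 < mu (B `&` [set y | (g y <= n%:R)%R]))%E.
Proof.
move=> mB muB mg; apply: contrapT => H.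
have H0 n : mu (B `&` [set y | (g y <= n%:R)%R]) = 0%E.
  apply/eqP; rewrite eq_le measure_ge0 andbT leNgt; apply/negP => h.
  by apply: H; exists n.
have : (mu B <= \big[+%E/0%E]_(0 <= n <oo) mu (B `&` [set y | (g y <= n%:R)%R]))%E.
  apply: (@measure_sigma_subadditive _ _ _ mu) => //.
  - by move=> n; exact: mset_le.
  - move=> y By; exists (Num.Def.trunc `|g y|).+1 => //; split => //=.
    apply: le_trans (ltW (truncnS_gt _)); exact: ler_norm.
rewrite eseries0; last by move=> i _ _; exact: H0.
by rewrite leNgt muB.
Qed.

Lemma AB (q : T -> \bar R) (h : T -> R) (F : set T) (n m0 : R) :
  (forall x, (1 <= q x)%E) -> measurable F -> 0 <= m0 -> (mu F <= m0%:E)%E ->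
  0 <= n -> (forall y, `|h y| <= n * \1_F y) ->
  exists2 l, 0 < l & (modular mu q (fun y => (h y / l)%R) <= 1)%E.
Proof.
move=> q1 mF m00 muF n0 hb.
set k := (m0 + 1)^-1.
have k0 : 0 < k by rewrite invr_gt0; lra.
have k1 : k <= 1 by rewrite invf_le1; lra.
have l0 : 0 < (n + 1) * (m0 + 1) by apply: mulr_gt0; lra.
exists ((n + 1) * (m0 + 1)) => //.
set l := (n + 1) * (m0 + 1).
have hl y : `|h y / l| <= k * \1_F y.
  rewrite normrM normfV (ger0_norm (ltW l0)).
  move: (hb y); rewrite indicE; case: (y \in F) => /= H.
    rewrite mulr1 ler_pdivrMr //.
    have -> : k * l = n + 1 by rewrite /k /l; field; lra.
    lra.
  rewrite mulr0 in H; rewrite mulr0.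
  have -> : `|h y| = 0 by apply/eqP; rewrite eq_le normr_ge0 andbT.
  by rewrite mul0r.
have hk y : `|h y / l| <= k.
  apply: le_trans (hl y) _; rewrite indicE; case: (y \in F) => /=.
    by rewrite mulr1.
  by rewrite mulr0 ltW.
rewrite /modular.
have I : (\int[mu]_(x in [set x | q x != +oo%E]) (`|h x / l| `^ fine (q x))%:E
           <= (k * m0)%:E)%E.
  apply: (@le_trans _ _ (\int[mu]_(x in [set x | q x != +oo%E]) ((k * \1_F x)%:E))%E).
    apply: le_integral_nm => x qx; first by rewrite lee_fin powR_ge0.
    rewrite lee_fin; apply: le_trans (hl x).
    apply: pow_le_self; [exact: normr_ge0 | exact: le_trans (hk x) k1 |].
    have qx' : q x != +oo%E := qx.
    move: (q1 x) qx'; case: (q x) => [r| |] //=; try by rewrite ?lee_fin ?leeNy_eq.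
  rewrite integral_mkcond.
  apply: (@le_trans _ _ (\int[mu]_x ((k * \1_F x)%:E))%E).
    apply: le_integral_nm => x _; rewrite /patch; case: ifPn => _ //.
      by rewrite lee_fin mulr_ge0 // ltW.
    by rewrite lee_fin mulr_ge0 // ltW.
  have mi : measurable_fun setT (\1_F : T -> R) by exact: measurable_indic.
  have Mi := (proj2 (@measurable_EFinP _ _ R setT (\1_F)) mi).
  under eq_integral do rewrite EFinM.
  rewrite ge0_integralZl_EFin //; last by rewrite ltW.
  rewrite integral_indic // setIT EFinM.
  by apply: lee_wpmul2l => //; rewrite lee_fin ltW.
have L : (Linf_on mu [set x | q x = +oo%E] (fun y => (h y / l)%R) <= k%:E)%E.
  apply: ereal_inf_lbound; split; first by rewrite lee_fin ltW.
  by apply: aeW => x _; rewrite lee_fin; exact: hk.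
apply: le_trans (leeD I L) _.
rewrite -EFinD lee_fin /k.
have -> : (m0 + 1)^-1 * m0 + (m0 + 1)^-1 = 1 by field; lra.
by [].
Qed.

End Helpers4.

Unset Implicit Arguments. Set Strict Implicit.

Theorem lemma3p2 (d : measure_display) (T : measurableType d) (R : realType)
  (dist : T -> T -> R) (mu : {measure set T -> \bar R})
  (p : T -> \bar R) (w : T -> R) :
  homogeneous_type dist mu -> exponent p -> A_p dist mu p w ->
  exists C : R, forall (x : T) (r : R) (E : set T),
    0 < r -> measurable E -> E `<=` qball dist x r ->
    (mu E / mu (qball dist x r)
     <= C%:E * (vnorm mu p (fun y => (w y * \1_E y)%R)
                / vnorm mu p (fun y => (w y * \1_(qball dist x r) y)%R)))%E.
Proof.
move=> [_ [_ [hball [_ [_ [Cmu hmu]]]]]] hp [[mw wloc w0 aew] [K HK]].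
exists (4 * K) => x r E r0 mE EB.
have mB : measurable (qball dist x r) := hball x r.
have [muB0 muBoo _] := hmu x r r0.
have hK := HK x r r0.
move: EB hK; set B := qball dist x r => EB hK.
have muBf : mu B \is a fin_num by rewrite ge0_fin_numE // ltW.
set m := fine (mu B).
have muBE : mu B = m%:E by rewrite /m fineK.
have m0 : 0 < m by rewrite -lte_fin -muBE.
have q1 y : (1 <= conj_exp p y)%E.
  have := hp.2 y; rewrite /conj_exp; case: (p y) => [s| |] //=.
  rewrite lee_fin => s1; case: ifPn => [_|/eqP sn1]; first exact: leey.
  rewrite lee_fin ler_pdivlMr; lra.
have mwi := measurable_winv w0 mw.
have vge0 q h : (0 <= vnorm mu q h)%E.
  by apply/ereal_infP => _ [l [l0 _] <-]; rewrite lee_fin ltW.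
have [n Fn] := EXN mB muB0 mw.
set F := B `&` [set y | (w y <= n%:R)%R] in Fn.
have mF : measurable F by exact: mset_le.
have muFB : (mu F <= m%:E)%E by rewrite -muBE; apply: le_measure; rewrite ?inE //; move=> y [].
have [lF lF0 HlF] : exists2 l, 0 < l &
    (modular mu p (fun y => ((w y * \1_F y) / l)%R) <= 1)%E.
  apply: (AB (proj2 hp) mF (ltW m0) muFB (ler0n _ n)).
  move=> y; rewrite indicE; case: (boolP (y \in F)) => /= yF.
    rewrite !mulr1 ger0_norm //; move: yF; rewrite inE => -[_ h]; exact: h.
  by rewrite !mulr0 normr0.
have muFf : mu F \is a fin_num.
  by rewrite ge0_fin_numE // (le_lt_trans muFB) // ltry.
have c0 : (0 < vnorm mu (conj_exp p) (fun y => ((w y)^-1 * \1_B y)%R))%E.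
  apply: (@lt_le_trans _ _ ((fine (mu F)) / (4 * lF))%:E).
    rewrite lte_fin divr_gt0 //; last by apply: mulr_gt0 => //; lra.
    by rewrite -lte_fin fineK.
  apply/ereal_infP => _ [mm [mm0 Hmm] <-].
  have := HC hp mw w0 aew mF mB lF0 mm0 HlF Hmm.
  rewrite setIidl; last by move=> y [].
  rewrite -(fineK muFf) lee_fin => h.
  by rewrite lee_fin ler_pdivrMr; [lra | apply: mulr_gt0 => //; lra].
have [n' Gn] := EXN mB muB0 mwi.
set G := B `&` [set y | ((w y)^-1 <= n'%:R)%R] in Gn.
have mG : measurable G by exact: mset_le.
have muGB : (mu G <= m%:E)%E by rewrite -muBE; apply: le_measure; rewrite ?inE //; move=> y [].
have [lG lG0 HlG] : exists2 l, 0 < l &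
    (modular mu (conj_exp p) (fun y => (((w y)^-1 * \1_G y) / l)%R) <= 1)%E.
  apply: (AB q1 mG (ltW m0) muGB (ler0n _ n')).
  move=> y; rewrite indicE; case: (boolP (y \in G)) => /= yG.
    rewrite !mulr1 ger0_norm ?invr_ge0 //; move: yG; rewrite inE => -[_ h]; exact: h.
  by rewrite !mulr0 normr0.
have muGf : mu G \is a fin_num.
  by rewrite ge0_fin_numE // (le_lt_trans muGB) // ltry.
have b0 : (0 < vnorm mu p (fun y => (w y * \1_B y)%R))%E.
  apply: (@lt_le_trans _ _ ((fine (mu G)) / (4 * lG))%:E).
    rewrite lte_fin divr_gt0 //; last by apply: mulr_gt0 => //; lra.
    by rewrite -lte_fin fineK.
  apply/ereal_infP => _ [ll [ll0 Hll] <-].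
  have := HC hp mw w0 aew mB mG ll0 lG0 Hll HlG.
  rewrite setIidr; last by move=> y [].
  rewrite -(fineK muGf) lee_fin => h.
  by rewrite lee_fin ler_pdivrMr; [lra | apply: mulr_gt0 => //; lra].
move: c0 b0 hK.
set b := vnorm mu p (fun y => (w y * \1_B y)%R).
set c := vnorm mu (conj_exp p) (fun y => ((w y)^-1 * \1_B y)%R).
move=> c0 b0 hK.
have bfin : b \is a fin_num.
  rewrite ge0_fin_numE ?vge0 // ltey; apply/negP => /eqP bE.
  by move: hK; rewrite bE gt0_mulye // muBE -EFinM leye_eq.
have cfin : c \is a fin_num.
  rewrite ge0_fin_numE ?vge0 // ltey; apply/negP => /eqP cE.
  by move: hK; rewrite cE gt0_muley // muBE -EFinM leye_eq.
set b1 := fine b; set c1 := fine c.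
have bE : b = b1%:E by rewrite /b1 fineK.
have cE : c = c1%:E by rewrite /c1 fineK.
have b1p : 0 < b1 by rewrite -lte_fin -bE.
have c1p : 0 < c1 by rewrite -lte_fin -cE.
have hK' : b1 * c1 <= K * m.
  by move: hK; rewrite bE cE muBE -!EFinM lee_fin.
have Kp : 0 < K by nra.
have muEB : (mu E <= mu B)%E by apply: le_measure; rewrite ?inE.
have muEf : mu E \is a fin_num.
  by rewrite ge0_fin_numE // (le_lt_trans muEB).
set e := fine (mu E).
have muEE : mu E = e%:E by rewrite /e fineK.
have e0 : 0 <= e by rewrite -lee_fin -muEE.
set a := vnorm mu p (fun y => (w y * \1_E y)%R).
have [aE|aN] := eqVneq a +oo%E.
  rewrite aE bE inver (gt_eqF b1p) /= gt0_mulye ?lte_fin ?invr_gt0 //.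
  by rewrite gt0_muley ?lte_fin ?mulr_gt0 // leey.
have afin : a \is a fin_num by rewrite ge0_fin_numE ?vge0 // ltey.
set a1 := fine a.
have aE : a = a1%:E by rewrite /a1 fineK.
have a0 : 0 <= a1 by rewrite -lee_fin -aE vge0.
have step1 mm : 0 < mm ->
    (modular mu (conj_exp p) (fun y => (((w y)^-1 * \1_B y) / mm)%R) <= 1)%E ->
    e <= 4 * a1 * mm.
  move=> mm0 Hmm.
  have : ((e / (4 * mm))%:E <= a)%E.
    apply/ereal_infP => _ [l [l0 Hl] <-].
    have := HC hp mw w0 aew mE mB l0 mm0 Hl Hmm.
    rewrite setIidl // muEE lee_fin => h.
    by rewrite lee_fin ler_pdivrMr; [lra | apply: mulr_gt0 => //; lra].
  by rewrite aE lee_fin ler_pdivrMr; [lra | apply: mulr_gt0 => //; lra].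
have step2 : e <= 4 * a1 * c1.
  have [a00|a0p] : a1 = 0 \/ 0 < a1.
    by move: a0; rewrite le_eqVlt => /orP[/eqP <-|]; [left|right].
    have : (c < (c1 + 1)%:E)%E by rewrite cE lte_fin; lra.
    move=> /ereal_inf_lt [_ [mm [mm0 Hmm] <-] _].
    have := step1 mm mm0 Hmm; rewrite a00 => h.
    lra.
  have : ((e / (4 * a1))%:E <= c)%E.
    apply/ereal_infP => _ [mm [mm0 Hmm] <-].
    have := step1 mm mm0 Hmm => h.
    by rewrite lee_fin ler_pdivrMr; [lra | apply: mulr_gt0 => //; lra].
  by rewrite cE lee_fin ler_pdivrMr; [lra | apply: mulr_gt0 => //; lra].
rewrite muEE muBE aE bE !inver (gt_eqF m0) (gt_eqF b1p) /= -!EFinM lee_fin.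
have key : e * b1 <= 4 * K * a1 * m by nra.
have -> : 4 * K * (a1 * b1^-1) = (4 * K * a1 * m) / b1 / m.
  by field; rewrite (gt_eqF m0) (gt_eqF b1p).
by rewrite ler_pM2r ?invr_gt0 // ler_pdivlMr.
Qed.
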